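(* For all $n\ge0$, \[ c_{n+3}^2-1=\sum_{k=0}^n\left\{c_k^2+2\sum_{i=0}^k p_{k+2-i}c_i^2\right\}. \]
   Context: The Narayana's cows numbers $c_n$ are defined by $c_n=\delta_{n,0}+c_{n-1}+c_{n-3}$ for $n\ge0$, $c_n=0$ for $n<0$. The Padovan numbers $p_n$ are defined by $p_n=\delta_{n,0}+p_{n-2}+p_{n-3}$ for $n\ge0$, $p_n=0$ for $n<0$. $\delta_{i,j}$ is $1$ if $i=j$ and $0$ otherwise. *)

(* Defs.v *)
From mathcomp Require Import all_boot.
Set Implicit Arguments. Unset Strict Implicit. Unset Printing Implicit Defensive.

(* Narayana's cows numbers: c_n = [n=0] + c_{n-1} + c_{n-3}, c_n = 0 for n<0.
   Hence c_0 = c_1 = c_2 = 1 and c_{n+3} = c_{n+2} + c_n. *)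
Fixpoint cows (n : nat) : nat :=
  match n with
  | 0 => 1
  | k.+1 => match k with
            | 0 => 1
            | j.+1 => match j with
                      | 0 => 1
                      | m.+1 => cows k + cows m
                      end
            end
  end.

(* Padovan numbers: p_n = [n=0] + p_{n-2} + p_{n-3}, p_n = 0 for n<0.
   Hence p_0 = 1, p_1 = 0, p_2 = 1 and p_{n+3} = p_{n+1} + p_n. *)
Fixpoint padovan (n : nat) : nat :=
  match n with
  | 0 => 1
  | 1 => 0
  | 2 => 1
  | (m.+1 as k).+2 => padovan k + padovan m
  end.

Lemma cows_check : [seq cows i | i <- iota 0 10] = [:: 1;1;1;2;3;4;6;9;13;19].
Proof. by []. Qed.
Lemma padovan_check : [seq padovan i | i <- iota 0 10] = [:: 1;0;1;1;1;2;2;3;4;5].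
Proof. by []. Qed.

(* Main.v *)
Require Import Defs.
From mathcomp Require Import all_boot.
From mathcomp Require Import zify.

Definition S k := \sum_(0 <= i < k.+1) padovan (k + 2 - i) * (cows i) ^ 2.

Lemma cowsS m : cows m.+3 = cows m.+2 + cows m.
Proof. by []. Qed.

Lemma S_rec k : S (k+3) = cows (k+3) ^ 2 + cows (k+2) ^ 2 + S (k+1) + S k.
Proof.
rewrite /S.
have -> : (k+3).+1 = k.+3.+1 by lia.
have -> : (k+1).+1 = k.+1.+1 by lia.
rewrite (big_nat_recr k.+3) // (big_nat_recr k.+2) // (big_nat_recr k.+1) //.
rewrite (big_nat_recr k.+1 _ _ (leq0n _)).
have -> : \sum_(0 <= i < k.+1) padovan (k + 3 + 2 - i) * cows i ^ 2 =
  \sum_(0 <= i < k.+1) padovan (k + 1 + 2 - i) * cows i ^ 2 +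
  \sum_(0 <= i < k.+1) padovan (k + 2 - i) * cows i ^ 2.
  rewrite -big_split; apply: eq_big_nat => i /andP [_ Hi].
  have -> : k + 3 + 2 - i = (k + 2 - i).+3 by lia.
  have -> : k + 1 + 2 - i = (k + 2 - i).+1 by lia.
  by rewrite mulnDl.
have -> : k + 3 + 2 - k.+3 = 2 by lia.
have -> : k + 3 + 2 - k.+2 = 3 by lia.
have -> : k + 3 + 2 - k.+1 = 4 by lia.
have -> : k + 1 + 2 - k.+1 = 2 by lia.
have -> : k.+3 = k + 3 by lia.
have -> : k.+2 = k + 2 by lia.
rewrite !mul1n. rewrite /= -/(S k). lia.
Qed.

Lemma key k : cows (k+2) * cows k = S k.
Proof.
elim: k {-2}k (leqnn k) => [|m IH] k Hk.
  by move: Hk; rewrite leqn0 => /eqP ->; rewrite /S unlock.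
case: k Hk => [|[|[|k]]] Hk; try by rewrite /S unlock.
have H1 := IH k ltac:(lia).
have H2 := IH k.+1 ltac:(lia).
have -> : k.+3 = k + 3 by lia.
rewrite S_rec -H1.
have -> : k + 1 = k.+1 by lia.
rewrite -H2.
have -> : k + 3 + 2 = k.+4.+1 by lia.
have -> : k.+1 + 2 = k.+3 by lia.
have -> : k + 2 = k.+2 by lia.
have -> : k + 3 = k.+3 by lia.
rewrite !cowsS. nia.
Qed.

Lemma cows_pos n : 0 < cows n.
Proof.
elim: n {-2}n (leqnn n) => [|m IH] k Hk.
  by move: Hk; rewrite leqn0 => /eqP ->.
case: k Hk => [|[|[|k]]] Hk //. rewrite cowsS. have := IH k ltac:(lia). lia.
Qed.

Theorem mainTheorem14 (n : nat) :
  (cows (n + 3)) ^ 2 - 1 =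
  \sum_(0 <= k < n.+1)
     ((cows k) ^ 2 + 2 * \sum_(0 <= i < k.+1) padovan (k + 2 - i) * (cows i) ^ 2).
Proof.
elim: n => [|n IH]; first by rewrite unlock.
rewrite big_nat_recr // -IH -/(S n.+1) -key.
have -> : n.+1 + 3 = n.+4 by lia.
have -> : n + 3 = n.+3 by lia.
have -> : n.+1 + 2 = n.+3 by lia.
rewrite cowsS.
have := cows_pos n.+3. rewrite [ssrnat_addn__canonical__Monoid_Law _ _]/(addn _ _).
nia.
Qed.
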